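(* Let $f:\mathbb{N}\to\mathbb{R}$ with $f(1)=1$. Assume there exist $C>0$ and $\gamma\in\mathbb{R}$ such that $|f(n)|\leq Cn^\gamma$ for all $n\geq2$. Then $$|f^{-1}(n)|\leq n^{\gamma+\varsigma}, \quad n\geq2,$$ where $\varsigma>1$ is the unique real root of $\zeta(s)=\frac{1}{C}+1$.
   Context: $f^{-1}$ denotes the Dirichlet inverse of $f$: the arithmetic function with $\sum_{d\mid n} f(n/d) f^{-1}(d)=\varepsilon(n)$ for all $n$, where $\varepsilon(1)=1$ and $\varepsilon(n)=0$ for $n\ge2$. $\zeta$ is the Riemann zeta function. *)

(* Defs.v *)
From mathcomp Require Import all_boot all_order all_algebra.
From mathcomp Require Import all_classical all_reals all_analysis.
Set Implicit Arguments. Unset Strict Implicit. Unset Printing Implicit Defensive.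
Import Order.TTheory GRing.Theory Num.Theory.
Local Open Scope ring_scope.

(* Dirichlet convolution on arithmetic functions (values at n >= 1 matter). *)
Definition dirichlet_conv (R : pzRingType) (f g : nat -> R) (n : nat) : R :=
  \sum_(d <- divisors n) f (n %/ d)%N * g d.

Definition is_dirichlet_inverse (R : pzRingType) (f g : nat -> R) : Prop :=
  forall n : nat, (0 < n)%N -> dirichlet_conv f g n = (n == 1)%:R.

Definition zeta (R : realType) (s : R) : R :=
  limn (fun N : nat => \sum_(1 <= k < N) ((k%:R : R) `^ (- s))).

(* Main.v *)
Require Import Defs.
From mathcomp Require Import all_boot all_order all_algebra.
From mathcomp Require Import all_classical all_reals all_analysis.
From mathcomp Require Import ring lra.
Import Order.TTheory GRing.Theory Num.Theory numFieldNormedType.Exports.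
Local Open Scope ring_scope.

Lemma reindex_div (R : realType) n (F : nat -> R) : (0 < n)%N ->
  \sum_(d <- divisors n | d != n) F (n %/ d)%N
  = \sum_(e <- divisors n | e != 1%N) F e.
Proof.
move=> n0.
have inv : forall d, (d %| n)%N -> (n %/ (n %/ d))%N = d.
  by move=> d dd; rewrite divnA // mulKn.
have P : perm_eq (map (fun d => n %/ d)%N (divisors n)) (divisors n).
  apply: uniq_perm.
  - rewrite map_inj_in_uniq ?divisors_uniq // => a b.
    rewrite -!dvdn_divisors // => ha hb e.
    by rewrite -(inv a ha) -(inv b hb) e.
  - exact: divisors_uniq.
  - move=> x; apply/mapP/idP => [[d dd ->]| xd].
      by rewrite -dvdn_divisors // dvdn_div // dvdn_divisors.
    have hx : (x %| n)%N by rewrite dvdn_divisors.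
    exists (n %/ x)%N; last by rewrite inv.
    by rewrite -dvdn_divisors // dvdn_div.
rewrite -[RHS](perm_big _ P) big_map big_seq_cond [RHS]big_seq_cond.
apply: eq_bigl => d /=.
case: (boolP (d \in divisors n)) => //= hd.
have dd : (d %| n)%N by rewrite dvdn_divisors.
congr negb; apply/eqP/eqP => [->|h]; first by rewrite divnn n0.
by have := divnK dd; rewrite h mul1n => <-.
Qed.

Lemma sum_div_le (R : realType) n (F : nat -> R) : (0 < n)%N ->
  (forall k, 0 <= F k) ->
  \sum_(e <- divisors n | e != 1%N) F e <= \sum_(2 <= k < n.+1) F k.
Proof.
move=> n0 F0.
rewrite [X in _ <= X](bigID (fun k => (k %| n)%N)) /=.
rewrite -[X in X <= _]addr0; apply: lerD; last by rewrite sumr_ge0.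
rewrite le_eqVlt; apply/orP; left; apply/eqP; rewrite -big_filter -[RHS]big_filter.
apply: perm_big; apply: uniq_perm.
- by apply: filter_uniq; apply: divisors_uniq.
- by apply: filter_uniq; apply: iota_uniq.
- move=> x; rewrite !mem_filter mem_index_iota -dvdn_divisors //.
  case: (boolP (x %| n)%N) => hx; rewrite ?andbF ?andbT //=.
  have := dvdn_leq n0 hx; have := dvdn_gt0 n0 hx.
  case: x hx => [|[|x]] //.
Qed.

Section Z.
Variable R : realType.
Variable s : R.
Hypothesis s1 : 1 < s.

Let v (k : nat) : R := (k%:R `^ s)^-1.
Let S (N : nat) : R := \sum_(1 <= k < N) v k.

Lemma v_ge0 k : 0 <= v k.
Proof. by rewrite /v invr_ge0 powR_ge0. Qed.

Lemma v_anti m k : (0 < m)%N -> (m <= k)%N -> v k <= v m.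
Proof.
move=> m0 mk; rewrite /v lef_pV2 ?posrE ?powR_gt0 ?ltr0n //; last by apply: leq_trans mk.
apply: ge0_ler_powR => //; first exact: ltW (lt_trans ltr01 s1).
- by rewrite nnegrE ler0n.
- by rewrite nnegrE ler0n.
by rewrite ler_nat.
Qed.

Lemma S_step n : S n <= S n.+1.
Proof.
rewrite /S; case: n => [|n]; first by rewrite !big_geq.
by rewrite [X in _ <= X]big_nat_recr //= lerDl v_ge0.
Qed.

Lemma S_homo : {homo S : n m / (n <= m)%N >-> n <= m}.
Proof. by apply/nondecreasing_seqP => n; apply: S_step. Qed.

Let r : R := 2 / 2 `^ s.

Lemma r_lt1 : r < 1.
Proof.
have h : 2 `^ s = 2 * 2 `^ (s - 1).
 by rewrite mulr_powRB1 //; exact: lt_trans ltr01 s1.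
have h1 : 1 <= 2 `^ (s - 1).
  have := @ler_powR R 2 ltac:(lra) 0 (s - 1); rewrite powRr0; apply; rewrite subr_ge0; exact: ltW s1.
have h2 : 2 `^ (s - 1) != 1.
  rewrite powR_eq1 negb_or negb_or; apply/and3P; split.
  - by rewrite gt_eqF // ltr1n.
  - by rewrite -leNgt ler0n.
  - by rewrite subr_eq0 gt_eqF.
have h3 : 1 < 2 `^ (s - 1) by rewrite lt_neqAle eq_sym h2 h1.
rewrite /r h ltr_pdivrMr; last by apply: mulr_gt0 => //; apply: lt_le_trans h1.
lra.
Qed.

Lemma r_ge0 : 0 <= r.
Proof. by rewrite /r divr_ge0 // powR_ge0. Qed.

Lemma block m : \sum_(2 ^ m <= k < 2 ^ m.+1) v k <= r ^+ m.
Proof.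
apply: le_trans (_ : \sum_(2 ^ m <= k < 2 ^ m.+1) v (2 ^ m) <= _).
  rewrite big_nat_cond [X in _ <= X]big_nat_cond.
  apply: ler_sum => k /andP[/andP[h1 _] _]; apply: v_anti => //.
  by rewrite expn_gt0.
rewrite sumr_const_nat expnS mul2n -addnn addnK /v.
have -> : ((2 ^ m)%N%:R : R) = 2 ^+ m by rewrite natrX.
have e : (2 ^+ m : R) `^ s = (2 `^ s) ^+ m.
  rewrite -powR_mulrn // -powRrM mulrC powRrM powR_mulrn //; exact: powR_ge0.
have -> : forall x : R, x *+ (2 ^ m) = x * 2 ^+ m by move=> x; rewrite -natrX mulr_natr.
by rewrite e /r exprMn exprVn mulrC.
Qed.

Lemma S_pow M : S (2 ^ M) * (1 - r) <= 1 - r ^+ M.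
Proof.
elim: M => [|M IH].
  by rewrite expn0 /S big_geq // mul0r expr0 subrr.
rewrite /S (@big_cat_nat _ _ _ (2 ^ M)) //=; last 2 first.
- by rewrite expn_gt0.
- by rewrite leq_exp2l.
rewrite -/(S (2 ^ M)) mulrDl.
have hb := block M.
have hr := r_lt1.
have hr0 := r_ge0.
rewrite exprS.
have : (\sum_(2 ^ M <= k < 2 ^ M.+1) v k) * (1 - r) <= r ^+ M * (1 - r).
  by rewrite ler_wpM2r // subr_ge0 ltW.
lra.
Qed.

Lemma S_bound N : S N <= (1 - r)^-1.
Proof.
have hr := r_lt1.
apply: le_trans (_ : S (2 ^ N) <= _).
  by apply: S_homo; apply: ltnW; apply: ltn_expl.
rewrite -[X in _ <= X]div1r ler_pdivlMr; last by lra.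
apply: le_trans (S_pow N) _.
rewrite lerBlDr lerDl; apply: exprn_ge0; exact: r_ge0.
Qed.

Lemma S_cvg : cvgn S.
Proof.
apply: nondecreasing_is_cvgn; first exact: S_homo.
by exists (1 - r)^-1 => _ [N _ <-]; apply: S_bound.
Qed.

Lemma S_le_lim N : S N <= limn S.
Proof. exact: nondecreasing_cvgn_le S_homo S_cvg N. Qed.

Lemma zeta_ge n (n0 : (0 < n)%N) : 1 + \sum_(2 <= k < n.+1) v k <= zeta s.
Proof.
have eqS : (fun N : nat => \sum_(1 <= k < N) ((k%:R : R) `^ (- s))) = S.
  by apply: funext => N; apply: eq_bigr => k _; rewrite powRN.
rewrite /zeta eqS; apply: le_trans (S_le_lim n.+1).
rewrite /S [X in _ <= X]big_ltn // /v. by rewrite (_ : ((1%:R : R) `^ s)^-1 = 1) // powR1 invr1.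
Qed.

End Z.

Theorem proposition3p10 (R : realType) (f finv : nat -> R) (C gamma varsigma : R) :
  f 1%N = 1 ->
  0 < C ->
  (forall n : nat, (2 <= n)%N -> `|f n| <= C * (n%:R `^ gamma)) ->
  is_dirichlet_inverse f finv ->
  1 < varsigma ->
  zeta varsigma = C^-1 + 1 ->
  forall n : nat, (2 <= n)%N -> `|finv n| <= n%:R `^ (gamma + varsigma).
Proof.
move=> f1 C0 hf hinv s1 hz.
have key : forall n, (0 < n)%N -> `|finv n| <= n%:R `^ (gamma + varsigma).
  elim/ltn_ind => n IH n0.
  case: (ltnP 1 n) => [n2 | n1].
    have H := hinv n n0.
    rewrite /dirichlet_conv (bigD1_seq n) ?divisors_id ?divisors_uniq //= in H.
    rewrite divnn n0 f1 mul1r gtn_eqF //= in H.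
    move/eqP: H; rewrite addr_eq0 => /eqP ->; rewrite normrN.
    apply: le_trans (ler_norm_sum _ _ _) _.
    set T := \sum_(d <- divisors n | d != n) ((n %/ d)%N%:R `^ varsigma)^-1.
    have hT : T <= C^-1.
      rewrite /T (@reindex_div R n (fun k => (k%:R `^ varsigma)^-1) n0).
      apply: le_trans (@sum_div_le R n _ n0 _) _.
        by move=> k; rewrite invr_ge0 powR_ge0.
      have := @zeta_ge R varsigma s1 n n0; rewrite hz; lra.
    apply: le_trans (_ : \sum_(d <- divisors n | d != n)
        C * (n%:R `^ (gamma + varsigma) * ((n %/ d)%N%:R `^ varsigma)^-1) <= _).
      rewrite big_seq_cond [X in _ <= X]big_seq_cond.
      apply: ler_sum => d /andP[dn dne].
      have dd : (d %| n)%N by rewrite dvdn_divisors.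
      have d0 : (0 < d)%N := dvdn_gt0 n0 dd.
      have dlt : (d < n)%N by rewrite ltn_neqAle dne dvdn_leq.
      have IHd := IH d dlt d0.
      have e := divnK dd.
      have q2 : (2 <= n %/ d)%N.
        case: (n %/ d)%N e => [|[|q]] //= e.
        - by move: n0; rewrite -e mul0n.
        - by move: dne; rewrite -e mul1n eqxx.
      rewrite normrM.
      apply: le_trans (ler_pM (normr_ge0 _) (normr_ge0 _) (hf _ q2) IHd) _.
      set a := ((n %/ d)%N%:R : R); set b := (d%:R : R).
      have ab : (n%:R : R) = a * b by rewrite -natrM e.
      have a0 : 0 < a by rewrite ltr0n; apply: leq_trans q2.
      have b0 : 0 < b by rewrite ltr0n.
      rewrite ab (powRM _ (ltW a0) (ltW b0)) [a `^ (gamma + varsigma)]powRD; last first.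
        by rewrite (gt_eqF a0) implybT.
      have : a `^ varsigma != 0 by apply/lt0r_neq0/powR_gt0.
      move=> hne; rewrite le_eqVlt; apply/orP; left; apply/eqP; field.
      exact: hne.
    rewrite -mulr_sumr -mulr_sumr -/T mulrCA.
    apply: le_trans (ler_wpM2l (powR_ge0 _ _) (ler_wpM2l (ltW C0) hT)) _.
    by rewrite mulfV ?gt_eqF // mulr1.
  have -> : n = 1%N by apply/eqP; rewrite eqn_leq n1 n0.
  have H := hinv 1%N isT.
  rewrite /dirichlet_conv (_ : divisors 1 = [:: 1%N]) // big_seq1 /= f1 mul1r in H.
  by rewrite H powR1 normr1.
by move=> n n2; apply: key; apply: leq_trans n2.
Qed.
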